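(* (Flocking of the Cucker–Smale model.) Let $(\mathbf x(t),\mathbf v(t))=(\mathbf x_1,\dots,\mathbf x_N,\mathbf v_1,\dots,\mathbf v_N)(t)$ be a global classical solution of the Cucker–Smale system with communication kernel $\phi$ (essential communication diameter $D_\phi>0$) and amplitude $\kappa>0$, with initial data $(\mathbf x_0,\mathbf v_0)$. Assume the set of initial positions $\{\mathbf x_1(0),\dots,\mathbf x_N(0)\}$ is chain connected at scale $r$, with $r\le\frac16D_\phi$. Let $$\kappa_0:=\frac{16N^4}{r}|\delta\mathbf v_0|_2 .$$ Then there is an absolute constant $C\ge1$ such that if $\kappa\ge C\kappa_0$, then for all $t\ge0$ $$\max_{1\le i\le N}|\mathbf v_i(t)-\overline{\mathbf v}_0|\le|\delta\mathbf v_0|_\infty e^{-\frac{\kappa}{N}t}+2N|\delta\mathbf v_0|_2\,e^{-\frac{\kappa}{N^3}t}.$$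
   Context: A communication kernel is a function $\phi:[0,\infty)\to[0,\infty)$ (no regularity or boundedness assumed); $D_\phi:=\sup\{s>0:\ \phi(h)\ge1\text{ for all }0<h\le s\}$. The Cucker–Smale system on $\Omega=\mathbb T^d$ or $\mathbb R^d$ is $\dot{\mathbf x}_i=\mathbf v_i$, $\dot{\mathbf v}_i=\frac{\kappa}{N}\sum_{j=1}^N\phi(|\mathbf x_i-\mathbf x_j|)(\mathbf v_j-\mathbf v_i)$, $i=1,\dots,N$. Notation: $|\delta\mathbf v(t)|_2^2:=\frac1{N^2}\sum_{i,j}|\mathbf v_i(t)-\mathbf v_j(t)|^2$, $|\delta\mathbf v(t)|_\infty:=\max_{i,j}|\mathbf v_i(t)-\mathbf v_j(t)|$, $\delta\mathbf v_0:=\delta\mathbf v(0)$, $\overline{\mathbf v}_0:=\frac1N\sum_i\mathbf v_i(0)$. A finite set $P$ is chain connected at scale $r$ if every pair $\mathbf x,\mathbf y\in P$ is connected by a finite chain of balls $B_1,\dots,B_k$ of diameter $r$ with centers in $P$, consecutive balls having non-empty intersection, $\mathbf x\in\overline{B_1}$, $\mathbf y\in\overline{B_k}$. *)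

(* Defs.v *)
From Stdlib Require Import Reals Lra Lia List.
Open Scope R_scope.

(* Vectors of R^d are represented as functions nat -> R; only the
   coordinates k < d are relevant. *)
Definition vec := nat -> R.

Fixpoint sumUpto (f : nat -> R) (n : nat) : R :=
  match n with O => 0 | S m => sumUpto f m + f m end.

(* maxUpto f n = max (f 0, ..., f (n-1)), and 0 for n = 0 (used only on
   nonnegative quantities with n >= 1). *)
Fixpoint maxUpto (f : nat -> R) (n : nat) : R :=
  match n with O => 0 | S m => Rmax (maxUpto f m) (f m) end.

Definition vsub (x y : vec) : vec := fun k => x k - y k.

Definition vnorm (d : nat) (x : vec) : R := sqrt (sumUpto (fun k => (x k)^2) d).

Definition dist_Z (a : R) : R := Rmin (frac_part a) (1 - frac_part a).

(* Distance in Omega: the flat unit torus T^d = R^d / Z^d (points given by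
   lifts in R^d) if [torus = true], the Euclidean space R^d otherwise. *)
Definition dist_Omega (torus : bool) (d : nat) (x y : vec) : R :=
  if torus then sqrt (sumUpto (fun k => (dist_Z (x k - y k))^2) d)
  else vnorm d (vsub x y).

(* Set of s > 0 such that phi h >= 1 for all 0 < h <= s; D_phi is its
   supremum (possibly +infinity). *)
Definition Dphi_set (phi : R -> R) (s : R) : Prop :=
  0 < s /\ forall h, 0 < h <= s -> 1 <= phi h.

(* The finite set {p 0, ..., p (N-1)} is chain connected at scale r in
   Omega: every pair of points is joined by a finite chain of (open) balls
   of diameter r with centers in the set, consecutive balls intersecting,
   the first point in the closure of the first ball and the second point in
   the closure of the last ball. *)
Definition chain_connected (torus : bool) (d N : nat) (p : nat -> vec) (r : R)
  : Prop :=
  forall i j, (i < N)%nat -> (j < N)%nat ->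
  exists cs : list nat,
    cs <> nil /\ Forall (fun c => (c < N)%nat) cs /\
    dist_Omega torus d (p i) (p (hd O cs)) <= r / 2 /\
    dist_Omega torus d (p j) (p (last cs O)) <= r / 2 /\
    (forall m, (S m < length cs)%nat ->
       exists z : vec,
         dist_Omega torus d z (p (nth m cs O)) < r / 2 /\
         dist_Omega torus d z (p (nth (S m) cs O)) < r / 2).

Definition cont_nonneg (f : R -> R) (t : R) : Prop :=
  forall eps, 0 < eps -> exists delta, 0 < delta /\
    forall s, 0 <= s -> Rabs (s - t) < delta -> Rabs (f s - f t) < eps.

Definition CS_solution (torus : bool) (d N : nat) (phi : R -> R) (kappa : R)
  (x v : nat -> R -> vec) : Prop :=
  forall i k, (i < N)%nat -> (k < d)%nat ->
    (forall t, 0 <= t -> cont_nonneg (fun s => x i s k) t /\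
                         cont_nonneg (fun s => v i s k) t) /\
    (forall t, 0 < t ->
       derivable_pt_lim (fun s => x i s k) t (v i t k) /\
       derivable_pt_lim (fun s => v i s k) t
         (kappa / INR N *
          sumUpto (fun j => phi (dist_Omega torus d (x i t) (x j t)) *
                         (v j t k - v i t k)) N)).

Definition dv2 (d N : nat) (v : nat -> R -> vec) (t : R) : R :=
  sqrt (/ (INR N)^2 *
        sumUpto (fun i => sumUpto (fun j => (vnorm d (vsub (v i t) (v j t)))^2) N) N).

Definition dvinf (d N : nat) (v : nat -> R -> vec) (t : R) : R :=
  maxUpto (fun i => maxUpto (fun j => vnorm d (vsub (v i t) (v j t))) N) N.

Definition vbar0 (N : nat) (v : nat -> R -> vec) : vec :=
  fun k => / INR N * sumUpto (fun i => v i 0 k) N.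

(* Main.v *)
Require Import Defs.
From Stdlib Require Import Reals Lra Lia List ListDec Classical ZArith.
Open Scope R_scope.

Lemma sumUpto_ext f g n : (forall i, (i < n)%nat -> f i = g i) -> sumUpto f n = sumUpto g n.
Proof. induction n; simpl; intros H; auto. rewrite IHn by (intros; apply H; lia). rewrite H by lia. auto. Qed.

Lemma sumUpto_plus f g n : sumUpto (fun i => f i + g i) n = sumUpto f n + sumUpto g n.
Proof. induction n; simpl; [lra|]. rewrite IHn. lra. Qed.

Lemma sumUpto_minus f g n : sumUpto (fun i => f i - g i) n = sumUpto f n - sumUpto g n.
Proof. induction n; simpl; [lra|]. rewrite IHn. lra. Qed.

Lemma sumUpto_scal c f n : sumUpto (fun i => c * f i) n = c * sumUpto f n.
Proof. induction n; simpl; [lra|]. rewrite IHn. lra. Qed.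

Lemma sumUpto_const c n : sumUpto (fun _ => c) n = INR n * c.
Proof. induction n; simpl sumUpto; [simpl; lra|]. rewrite IHn, S_INR. lra. Qed.

Lemma sumUpto_zero n : sumUpto (fun _ => 0) n = 0.
Proof. rewrite sumUpto_const. lra. Qed.

Lemma sumUpto_le f g n : (forall i, (i < n)%nat -> f i <= g i) -> sumUpto f n <= sumUpto g n.
Proof. induction n; simpl; intros H; [lra|]. specialize (IHn ltac:(intros; apply H; lia)). specialize (H n ltac:(lia)). lra. Qed.

Lemma sumUpto_nonneg f n : (forall i, (i < n)%nat -> 0 <= f i) -> 0 <= sumUpto f n.
Proof. intros H. rewrite <- (sumUpto_zero n). apply sumUpto_le. auto. Qed.

Lemma sumUpto_term f n i : (forall j, (j < n)%nat -> 0 <= f j) -> (i < n)%nat -> f i <= sumUpto f n.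
Proof. induction n; simpl; intros H Hi; [lia|].
  assert (0 <= sumUpto f n) by (apply sumUpto_nonneg; intros; apply H; lia).
  destruct (Nat.eq_dec i n). subst. lra.
  specialize (IHn ltac:(intros; apply H; lia) ltac:(lia)). specialize (H n ltac:(lia)). lra. Qed.

Lemma sumUpto_swap (f : nat -> nat -> R) m n :
  sumUpto (fun i => sumUpto (fun j => f i j) n) m = sumUpto (fun j => sumUpto (fun i => f i j) m) n.
Proof. induction m; simpl.
  - rewrite sumUpto_zero. auto.
  - rewrite IHm, <- sumUpto_plus. auto. Qed.

Lemma sumUpto_eq0 f n : (forall i, (i < n)%nat -> 0 <= f i) -> sumUpto f n = 0 -> forall i, (i < n)%nat -> f i = 0.
Proof. intros H Hs i Hi. pose proof (sumUpto_term f n i H Hi). specialize (H i Hi). lra. Qed.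

Lemma dsum_antisym (a : nat -> nat -> R) (b : nat -> R) n :
  (forall i j, (i < n)%nat -> (j < n)%nat -> a i j = a j i) ->
  sumUpto (fun i => sumUpto (fun j => a i j * (b j - b i)) n) n = 0.
Proof. intros Hs.
  assert (E : sumUpto (fun i => sumUpto (fun j => a i j * b j) n) n =
              sumUpto (fun i => sumUpto (fun j => a i j * b i) n) n).
  { rewrite sumUpto_swap. apply sumUpto_ext; intros i Hi. apply sumUpto_ext; intros j Hj.
    rewrite Hs by auto. auto. }
  transitivity (sumUpto (fun i => sumUpto (fun j => a i j * b j) n - sumUpto (fun j => a i j * b i) n) n).
  { apply sumUpto_ext; intros. rewrite <- sumUpto_minus. apply sumUpto_ext; intros. ring. }
  rewrite sumUpto_minus, E. ring. Qed.

Lemma dsum_sym (q : nat -> nat -> R) n :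
  sumUpto (fun i => sumUpto (fun j => q i j) n) n =
  / 2 * sumUpto (fun i => sumUpto (fun j => q i j + q j i) n) n.
Proof.
  assert (E : sumUpto (fun i => sumUpto (fun j => q j i) n) n = sumUpto (fun i => sumUpto (fun j => q i j) n) n).
  { rewrite sumUpto_swap. auto. }
  transitivity (/2 * (sumUpto (fun i => sumUpto (fun j => q i j) n) n + sumUpto (fun i => sumUpto (fun j => q j i) n) n)).
  { rewrite E. lra. }
  f_equal. rewrite <- sumUpto_plus. apply sumUpto_ext; intros. rewrite <- sumUpto_plus. auto. Qed.

Lemma dsum_var (a : nat -> R) n :
  sumUpto (fun i => sumUpto (fun j => (a i - a j)^2) n) n =
  2 * INR n * sumUpto (fun i => a i ^ 2) n - 2 * (sumUpto a n)^2.
Proof.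
  transitivity (sumUpto (fun i => INR n * a i ^ 2 - 2 * a i * sumUpto a n + sumUpto (fun j => a j ^2) n) n).
  { apply sumUpto_ext; intros i Hi.
    transitivity (sumUpto (fun j => (a i ^ 2 + a j ^ 2) - 2 * a i * a j) n).
    { apply sumUpto_ext; intros. ring. }
    rewrite sumUpto_minus, sumUpto_plus, sumUpto_const.
    rewrite (sumUpto_scal (2 * a i) a). ring. }
  rewrite sumUpto_plus, sumUpto_minus, sumUpto_const, sumUpto_scal.
  rewrite (sumUpto_ext (fun i => 2 * a i * sumUpto a n) (fun i => (2 * sumUpto a n) * a i)) by (intros; ring).
  rewrite sumUpto_scal. ring. Qed.

Lemma maxUpto_le f n M : 0 <= M -> (forall i, (i < n)%nat -> f i <= M) -> maxUpto f n <= M.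
Proof. induction n; simpl; intros HM H; auto. apply Rmax_lub; auto. Qed.

Lemma maxUpto_nonneg f n : 0 <= maxUpto f n.
Proof. induction n; simpl; [lra|]. eapply Rle_trans; [exact IHn| apply Rmax_l]. Qed.

Definition N2 (d : nat) (w : nat -> R) := sqrt (sumUpto (fun k => (w k)^2) d).

Lemma sq_nonneg_sum d w : 0 <= sumUpto (fun k => (w k)^2) d.
Proof. apply sumUpto_nonneg; intros. apply pow2_ge_0. Qed.

Lemma CS_sq d a b : (sumUpto (fun k => a k * b k) d)^2 <= sumUpto (fun k => a k ^2) d * sumUpto (fun k => b k ^2) d.
Proof.
  set (A := sumUpto (fun k => a k ^2) d). set (B := sumUpto (fun k => b k ^2) d).
  set (P := sumUpto (fun k => a k * b k) d).
  assert (Q : forall t, 0 <= A - 2 * t * P + t^2 * B).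
  { intros t. assert (0 <= sumUpto (fun k => (a k - t * b k)^2) d) by (apply sumUpto_nonneg; intros; apply pow2_ge_0).
    replace (A - 2*t*P + t^2*B) with (sumUpto (fun k => (a k - t * b k)^2) d); auto.
    unfold A, B, P. rewrite <- sumUpto_scal, <- sumUpto_scal, <- sumUpto_minus, <- sumUpto_plus.
    apply sumUpto_ext; intros; ring. }
  assert (HA : 0 <= A) by apply sq_nonneg_sum. assert (HB : 0 <= B) by apply sq_nonneg_sum.
  destruct (Req_dec B 0) as [HB0|HB0].
  -
    assert (P = 0).
    { destruct (Req_dec P 0); auto. exfalso. specialize (Q ((A + 1) / (2 * P))).
      rewrite HB0 in Q. replace (A - 2 * ((A + 1) / (2 * P)) * P + ((A + 1) / (2 * P)) ^ 2 * 0) with (-1) in Q by (field; auto). lra. }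
    rewrite H, HB0. lra.
  - specialize (Q (P / B)). assert (0 < B) by lra.
    apply Rmult_le_compat_r with (r := B) in Q; [|lra].
    replace ((A - 2 * (P / B) * P + (P / B) ^ 2 * B) * B) with (A * B - P^2) in Q by (field; auto). lra. Qed.

Lemma CS d a b : sumUpto (fun k => a k * b k) d <= N2 d a * N2 d b.
Proof. unfold N2. rewrite <- sqrt_mult by apply sq_nonneg_sum.
  destruct (Rle_or_lt (sumUpto (fun k => a k * b k) d) 0). 
  - eapply Rle_trans; [exact H| apply sqrt_pos].
  - rewrite <- (sqrt_pow2 (sumUpto (fun k => a k * b k) d)) by lra. apply sqrt_le_1_alt. apply CS_sq. Qed.

Lemma N2_nonneg d w : 0 <= N2 d w. Proof. apply sqrt_pos. Qed.

Lemma N2_sq d w : (N2 d w)^2 = sumUpto (fun k => (w k)^2) d.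
Proof. unfold N2. rewrite pow2_sqrt; auto. apply sq_nonneg_sum. Qed.

Lemma N2_mono d a b : (forall k, (k < d)%nat -> 0 <= a k <= b k) -> N2 d a <= N2 d b.
Proof. intros H. unfold N2. apply sqrt_le_1_alt. apply sumUpto_le. intros k Hk. specialize (H k Hk).
  apply pow_incr. lra. Qed.

Lemma sq_le_inv x y : 0 <= x -> 0 <= y -> x^2 <= y^2 -> x <= y.
Proof. intros. nra. Qed.

Lemma N2_plus d a b : N2 d (fun k => a k + b k) <= N2 d a + N2 d b.
Proof.
  pose proof (N2_nonneg d a); pose proof (N2_nonneg d b). pose proof (N2_nonneg d (fun k => a k + b k)).
  apply sq_le_inv; [lra|lra|].
  rewrite N2_sq. replace ((N2 d a + N2 d b)^2) with ((N2 d a)^2 + (N2 d b)^2 + 2 * (N2 d a * N2 d b)) by ring.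
  rewrite !N2_sq. pose proof (CS d a b).
  replace (sumUpto (fun k => (a k + b k)^2) d) with
     (sumUpto (fun k => a k ^2) d + sumUpto (fun k => b k ^2) d + 2 * sumUpto (fun k => a k * b k) d).
  lra. rewrite <- sumUpto_scal, <- !sumUpto_plus. apply sumUpto_ext; intros; ring. Qed.

Lemma N2_coord d w k : (k < d)%nat -> Rabs (w k) <= N2 d w.
Proof. intros Hk. unfold N2. apply Rle_trans with (sqrt (Rabs (w k)^2)); [rewrite sqrt_pow2 by apply Rabs_pos; lra|]. apply sqrt_le_1_alt.
  rewrite pow2_abs. apply (sumUpto_term (fun k => w k ^2)); auto. intros; apply pow2_ge_0. Qed.

Lemma N2_pos_coord d w k : (k < d)%nat -> w k <> 0 -> 0 < N2 d w.
Proof. intros Hk Hw. pose proof (N2_coord d w k Hk). pose proof (Rabs_pos_lt _ Hw). lra. Qed.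

Lemma N2_bound d w c : 0 <= c -> (forall k, (k < d)%nat -> Rabs (w k) <= c) -> N2 d w <= sqrt (INR d) * c.
Proof. intros Hc H. unfold N2. replace (sqrt (INR d) * c) with (sqrt (INR d) * sqrt (c^2)) by (rewrite sqrt_pow2; auto). rewrite <- sqrt_mult by (auto using pos_INR, pow2_ge_0).
  apply sqrt_le_1_alt. rewrite <- sumUpto_const. apply sumUpto_le. intros k Hk. rewrite <- (pow2_abs (w k)).
  apply pow_incr. split; [apply Rabs_pos| auto]. Qed.

Lemma dZ_le a (n : Z) : dist_Z a <= Rabs (a - IZR n).
Proof. unfold dist_Z, frac_part. set (m := Int_part a).
  pose proof (base_fp a) as [H1 H2]. unfold frac_part in H1, H2. fold m in H1, H2.
  destruct (Z_le_gt_dec n m) as [Hl|Hl].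
  - apply IZR_le in Hl. apply Rle_trans with (a - IZR m); [apply Rmin_l|]. rewrite Rabs_right; lra.
  - assert (Hl' : (m + 1 <= n)%Z) by lia. apply IZR_le in Hl'. rewrite plus_IZR in Hl'.
    apply Rle_trans with (1 - (a - IZR m)); [apply Rmin_r|]. rewrite Rabs_left1; lra. Qed.

Lemma dZ_attain a : exists n : Z, dist_Z a = Rabs (a - IZR n).
Proof. unfold dist_Z, frac_part. set (m := Int_part a).
  pose proof (base_fp a) as [H1 H2]. unfold frac_part in H1, H2. fold m in H1, H2.
  destruct (Rle_dec (a - IZR m) (1 - (a - IZR m))).
  - exists m. rewrite Rmin_left by auto. rewrite Rabs_right; lra.
  - exists (m + 1)%Z. rewrite Rmin_right by lra. rewrite plus_IZR. rewrite Rabs_left1; simpl; lra. Qed.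

Lemma dZ_nonneg a : 0 <= dist_Z a.
Proof. destruct (dZ_attain a) as [n ->]. apply Rabs_pos. Qed.

Lemma IZR_ne0 (z : Z) : z <> 0%Z -> 1 <= Rabs (IZR z).
Proof. intros Hz. destruct (Z_le_gt_dec z 0).
  - assert (z <= -1)%Z by lia. apply IZR_le in H. rewrite Rabs_left1; simpl in *; lra.
  - assert (1 <= z)%Z by lia. apply IZR_le in H. rewrite Rabs_right; simpl in *; lra. Qed.

Definition rho (torus : bool) (a : R) : R := if torus then dist_Z a else Rabs a.

Lemma rho_nonneg t a : 0 <= rho t a.
Proof. destruct t; simpl; [apply dZ_nonneg|apply Rabs_pos]. Qed.

Lemma rho_le_abs t a : rho t a <= Rabs a.
Proof. destruct t; simpl; [|lra]. pose proof (dZ_le a 0). simpl in H. rewrite Rminus_0_r in H. auto. Qed.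

Lemma rho_add t a b : rho t (a + b) <= rho t a + rho t b.
Proof. destruct t; simpl; [|apply Rabs_triang].
  destruct (dZ_attain a) as [n Hn]. destruct (dZ_attain b) as [m Hm]. rewrite Hn, Hm.
  apply Rle_trans with (Rabs (a + b - IZR (n + m))); [apply dZ_le|].
  rewrite plus_IZR. replace (a + b - (IZR n + IZR m)) with ((a - IZR n) + (b - IZR m)) by ring. apply Rabs_triang. Qed.

Lemma rho_opp t a : rho t (- a) = rho t a.
Proof. destruct t; simpl; [|apply Rabs_Ropp].
  apply Rle_antisym.
  - destruct (dZ_attain a) as [n Hn]. rewrite Hn. apply Rle_trans with (Rabs (-a - IZR (-n))); [apply dZ_le|].
    rewrite opp_IZR. replace (-a - - IZR n) with (- (a - IZR n)) by ring. rewrite Rabs_Ropp; lra.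
  - destruct (dZ_attain (-a)) as [n Hn]. rewrite Hn. apply Rle_trans with (Rabs (a - IZR (-n))); [apply dZ_le|].
    rewrite opp_IZR. replace (a - - IZR n) with (- (-a - IZR n)) by ring. rewrite Rabs_Ropp; lra. Qed.

Lemma rho_0 t : rho t 0 = 0.
Proof. apply Rle_antisym; [|apply rho_nonneg]. pose proof (rho_le_abs t 0). rewrite Rabs_R0 in H. auto. Qed.

Lemma Rabs_eq_0 x : Rabs x = 0 -> x = 0.
Proof. intros H. destruct (Req_dec x 0); auto. apply Rabs_no_R0 in H0. contradiction. Qed.

Lemma rho_pos t a h : rho t a = 0 -> 0 < Rabs h < 1 -> 0 < rho t (a + h).
Proof. intros Ha Hh. destruct t; simpl in *.
  - destruct (dZ_attain a) as [n Hn]. rewrite Hn in Ha. apply Rabs_eq_0 in Ha.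
    destruct (Rle_lt_or_eq_dec 0 _ (dZ_nonneg (a + h))) as [|He]; auto. exfalso.
    destruct (dZ_attain (a + h)) as [m Hm]. rewrite Hm in He. symmetry in He. apply Rabs_eq_0 in He.
    assert (h = IZR (m - n)) by (rewrite minus_IZR; lra).
    destruct (Z.eq_dec (m - n) 0) as [E|E].
    + rewrite E in H. simpl in H. rewrite H, Rabs_R0 in Hh. lra.
    + apply IZR_ne0 in E. rewrite <- H in E. lra.
  - apply Rabs_eq_0 in Ha. subst. rewrite Rplus_0_l. lra. Qed.

Lemma DO_eq torus d x y : dist_Omega torus d x y = N2 d (fun k => rho torus (x k - y k)).
Proof. unfold dist_Omega, N2, rho, vnorm, vsub. destruct torus; auto.
  f_equal. apply sumUpto_ext; intros. rewrite pow2_abs. auto. Qed.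

Lemma DO_nonneg torus d x y : 0 <= dist_Omega torus d x y.
Proof. rewrite DO_eq. apply N2_nonneg. Qed.

Lemma DO_sym torus d x y : dist_Omega torus d x y = dist_Omega torus d y x.
Proof. rewrite !DO_eq. unfold N2. f_equal. apply sumUpto_ext; intros.
  replace (x i - y i) with (- (y i - x i)) by ring. rewrite rho_opp. auto. Qed.

Lemma DO_refl torus d x : dist_Omega torus d x x = 0.
Proof. rewrite DO_eq. unfold N2. rewrite (sumUpto_ext _ (fun _ => 0)). rewrite sumUpto_zero. apply sqrt_0.
  intros. rewrite Rminus_diag, rho_0. ring. Qed.

Lemma DO_tri torus d x y z : dist_Omega torus d x z <= dist_Omega torus d x y + dist_Omega torus d y z.
Proof. rewrite !DO_eq.
  eapply Rle_trans; [|apply N2_plus]. apply N2_mono. intros k Hk. split; [apply rho_nonneg|].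
  replace (x k - z k) with ((x k - y k) + (y k - z k)) by ring. apply rho_add. Qed.

Lemma N2_abs d w : N2 d (fun k => Rabs (w k)) = N2 d w.
Proof. unfold N2. f_equal. apply sumUpto_ext. intros. rewrite pow2_abs. auto. Qed.

Lemma DO_shift torus d x y x' y' :
  dist_Omega torus d x' y' <= dist_Omega torus d x y + N2 d (fun k => (x' k - y' k) - (x k - y k)).
Proof. rewrite !DO_eq. rewrite <- (N2_abs d (fun k => (x' k - y' k) - (x k - y k))).
  eapply Rle_trans; [|apply N2_plus]. apply N2_mono. intros k Hk. split; [apply rho_nonneg|].
  pose proof (rho_add torus (x k - y k) ((x' k - y' k) - (x k - y k))) as H.
  replace (x k - y k + (x' k - y' k - (x k - y k))) with (x' k - y' k) in H by ring.
  pose proof (rho_le_abs torus (x' k - y' k - (x k - y k))). lra. Qed.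

Lemma DO_zero_coord torus d x y k : dist_Omega torus d x y = 0 -> (k < d)%nat -> rho torus (x k - y k) = 0.
Proof. intros H Hk. rewrite DO_eq in H. pose proof (N2_coord d (fun k => rho torus (x k - y k)) k Hk).
  simpl in H0. rewrite H in H0. pose proof (rho_nonneg torus (x k - y k)). rewrite Rabs_pos_eq in H0; lra. Qed.

Lemma DO_pos_coord torus d x y k : (k < d)%nat -> 0 < rho torus (x k - y k) -> 0 < dist_Omega torus d x y.
Proof. intros Hk H. rewrite DO_eq. apply (N2_pos_coord _ _ k Hk). simpl. lra. Qed.

Fixpoint pathR (Rl : nat -> nat -> Prop) (p : list nat) : Prop :=
  match p with
  | x :: ((y :: _) as rest) => Rl x y /\ pathR Rl rest
  | _ => True end.

Fixpoint psum (f : nat -> nat -> R) (p : list nat) : R :=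
  match p with
  | x :: ((y :: _) as rest) => f x y + psum f rest
  | _ => 0 end.

Fixpoint lsum (g : nat -> R) (l : list nat) : R :=
  match l with nil => 0 | x :: l' => g x + lsum g l' end.

Lemma lsum_app g l1 l2 : lsum g (l1 ++ l2) = lsum g l1 + lsum g l2.
Proof. induction l1; simpl; [lra|]. rewrite IHl1. lra. Qed.

Lemma lsum_nodup g N : forall l, NoDup l -> (forall x, In x l -> (x < N)%nat) ->
  (forall a, (a < N)%nat -> 0 <= g a) -> lsum g l <= sumUpto g N.
Proof. induction N; intros l Hd Hl Hg.
  - destruct l; simpl; [lra|]. specialize (Hl n (or_introl eq_refl)). lia.
  - simpl. destruct (in_dec Nat.eq_dec N l) as [Hin|Hin].
    + destruct (in_split _ _ Hin) as [l1 [l2 E]]. subst l.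
      rewrite lsum_app. simpl. destruct (NoDup_remove _ _ _ Hd) as [Hd' Hn].
      assert (lsum g (l1 ++ l2) <= sumUpto g N).
      { apply IHN; auto. intros x Hx. assert (x <> N) by (intro; subst; contradiction).
        assert (In x (l1 ++ N :: l2)) by (apply in_app_or in Hx; apply in_or_app; destruct Hx; [left|right; right]; auto).
        specialize (Hl x H0). lia. }
      rewrite lsum_app in H. lra.
    + assert (lsum g l <= sumUpto g N).
      { apply IHN; auto. intros x Hx. assert (x <> N) by (intro; subst; contradiction). specialize (Hl x Hx). lia. }
      specialize (Hg N ltac:(lia)). lra. Qed.

Lemma pathR_suffix Rl l1 l2 : pathR Rl (l1 ++ l2) -> pathR Rl l2.
Proof. induction l1 as [|x l1 IH]; simpl; auto. intros H. apply IH.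
  destruct (l1 ++ l2); [simpl; auto| destruct H; auto]. Qed.

Lemma last_app_cons (l1 l2 : list nat) x d : last (l1 ++ x :: l2) d = last (x :: l2) d.
Proof. induction l1 as [|a l1 IH]; [reflexivity|]. rewrite <- app_comm_cons, <- IH.
  destruct (l1 ++ x :: l2) eqn:E; [destruct l1; discriminate| reflexivity]. Qed.

Lemma loop_removal Rl : forall p, p <> nil -> pathR Rl p ->
  exists p', p' <> nil /\ pathR Rl p' /\ NoDup p' /\ hd 0%nat p' = hd 0%nat p /\
             last p' 0%nat = last p 0%nat /\ incl p' p.
Proof. induction p as [|x rest IH]; intros Hn Hp; [congruence|].
  destruct rest as [|y l].
  - exists (x :: nil). split; [congruence|]. split; [simpl; auto|]. split; [constructor; auto; constructor|].
    split; [auto|]. split; [auto| apply incl_refl].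
  - simpl in Hp. destruct Hp as [Hxy Hp].
    destruct (IH ltac:(congruence) Hp) as [r [Hrn [Hrp [Hrd [Hrh [Hrl Hri]]]]]].
    destruct (in_dec Nat.eq_dec x r) as [Hin|Hin].
    + destruct (in_split _ _ Hin) as [l1 [l2 E]]. subst r.
      exists (x :: l2). repeat split; try congruence.
      * eapply pathR_suffix. exact Hrp.
      * eapply NoDup_app_remove_l. exact Hrd.
      * rewrite <- last_app_cons with (l1 := l1). rewrite Hrl. simpl. auto.
      * intros z Hz. right. apply Hri. apply in_or_app. right. auto.
    + exists (x :: r). repeat split; try congruence.
      * destruct r as [|y' r']; [congruence|]. simpl in Hrh. subst y'. simpl. split; auto.
      * constructor; auto.
      * destruct r as [|y' r']; [congruence|]. simpl. simpl in Hrl. rewrite <- Hrl. auto.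
      * apply incl_cons. left; auto. intros z Hz. right. apply Hri. auto. Qed.

Lemma path_in Rl N p : pathR Rl p -> (forall a b, Rl a b -> (a < N)%nat /\ (b < N)%nat) ->
  (hd 0%nat p < N)%nat -> forall x, In x p -> (x < N)%nat.
Proof. induction p as [|a p IH]; simpl; intros Hp HR Hh z Hz; [contradiction|].
  destruct Hz as [<-|Hz]; auto. destruct p as [|b p]; [contradiction|].
  destruct Hp as [Hab Hp]. apply IH; auto. simpl. apply (HR a b Hab). Qed.

Lemma nodup_length N p : NoDup p -> (forall x, In x p -> (x < N)%nat) -> (length p <= N)%nat.
Proof. intros Hd H. rewrite <- (length_seq N 0). apply NoDup_incl_length; auto.
  intros x Hx. apply in_seq. specialize (H x Hx). lia. Qed.

Lemma sq_step A B L T : B^2 <= L * T -> 1 <= L -> 0 <= T -> (A + B)^2 <= (L + 1) * (A^2 + T).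
Proof. intros H1 H2 H3.
  assert (2 * A * B <= L * A^2 + T).
  { assert (0 <= (L * A - B)^2) by apply pow2_ge_0.
    assert (2 * A * B * L <= L^2 * A^2 + B^2) by nra.
    assert (2 * A * B * L <= L * (L * A^2 + T)) by nra.
    apply Rmult_le_reg_l with L; nra. }
  nra. Qed.

Lemma psum_nonneg f p : (forall a b, 0 <= f a b) -> 0 <= psum f p.
Proof. induction p as [|a p IH]; simpl; intros H; [lra|]. destruct p; [lra|]. specialize (IH H). specialize (H a n). lra. Qed.

Lemma CS_path (g : nat -> R) p : p <> nil ->
  (g (hd 0%nat p) - g (last p 0%nat))^2 <= INR (length p) * psum (fun a b => (g a - g b)^2) p.
Proof. induction p as [|a p IH]; intros Hn; [congruence|]. destruct p as [|b p].
  - simpl. replace (g a - g a) with 0 by ring. lra.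
  - specialize (IH ltac:(congruence)).
    change (hd 0%nat (b :: p)) with b in IH.
    change (hd 0%nat (a :: b :: p)) with a. change (last (a :: b :: p) 0%nat) with (last (b :: p) 0%nat).
    change (length (a :: b :: p)) with (S (length (b :: p))). rewrite S_INR.
    change (psum (fun a0 b0 => (g a0 - g b0) ^ 2) (a :: b :: p)) with
      ((g a - g b)^2 + psum (fun a0 b0 => (g a0 - g b0) ^ 2) (b :: p)).
    replace (g a - g (last (b :: p) 0%nat)) with ((g a - g b) + (g b - g (last (b :: p) 0%nat))) by ring.
    assert (0 <= psum (fun a0 b0 => (g a0 - g b0) ^ 2) (b :: p)) by (apply psum_nonneg; intros; apply pow2_ge_0).
    assert (1 <= INR (length (b :: p))) by (change (length (b :: p)) with (S (length p)); rewrite S_INR; pose proof (pos_INR (length p)); lra).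
    replace (INR (length (b :: p)) + 1) with (INR (length (b :: p)) + 1) by ring.
    apply sq_step; auto. Qed.

Lemma psum_sumUpto (f : nat -> nat -> nat -> R) d p :
  psum (fun a b => sumUpto (fun k => f k a b) d) p = sumUpto (fun k => psum (f k) p) d.
Proof. induction p as [|a p IH]; simpl. rewrite sumUpto_zero; auto. destruct p as [|b p].
  rewrite sumUpto_zero; auto. rewrite IH, <- sumUpto_plus. auto. Qed.

Lemma psum_le Rl f g p : pathR Rl p -> (forall a b, Rl a b -> f a b <= g a b) -> psum f p <= psum g p.
Proof. induction p as [|a p IH]; simpl; intros Hp H; [lra|]. destruct p as [|b p]; [lra|].
  destruct Hp. specialize (IH H1 H). specialize (H a b H0). lra. Qed.

Lemma psum_lsum f p N : (forall x, In x p -> (x < N)%nat) -> (forall a b, (a < N)%nat -> (b < N)%nat -> 0 <= f a b) ->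
  psum f p <= lsum (fun a => sumUpto (fun b => f a b) N) p.
Proof. induction p as [|a p IH]; intros Hin H; [simpl; lra|]. destruct p as [|b p].
  - assert (a < N)%nat by (apply Hin; simpl; auto).
    pose proof (sumUpto_nonneg (fun b => f a b) N ltac:(intros; apply H; auto)). simpl. lra.
  - specialize (IH ltac:(intros; apply Hin; right; auto) H). 
    assert (a < N)%nat by (apply Hin; simpl; auto).
    pose proof (sumUpto_term (fun b => f a b) N b ltac:(intros; apply H; auto) (Hin b ltac:(simpl; auto))).
    change (psum f (a :: b :: p)) with (f a b + psum f (b :: p)).
    change (lsum (fun a0 => sumUpto (fun b0 => f a0 b0) N) (a :: b :: p)) with
     (sumUpto (fun b0 => f a b0) N + lsum (fun a0 => sumUpto (fun b0 => f a0 b0) N) (b :: p)). lra. Qed.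

Lemma poincare N d (u : nat -> nat -> R) (w : nat -> nat -> R) (Rl : nat -> nat -> Prop) :
  (1 <= N)%nat ->
  (forall a b, (a < N)%nat -> (b < N)%nat -> 0 <= w a b) ->
  (forall a b, Rl a b -> (a < N)%nat /\ (b < N)%nat /\ 1 <= w a b) ->
  (forall i j, (i < N)%nat -> (j < N)%nat -> exists p, p <> nil /\ pathR Rl p /\ hd 0%nat p = i /\ last p 0%nat = j) ->
  (forall k, (k < d)%nat -> sumUpto (fun i => u i k) N = 0) ->
  2 * sumUpto (fun i => sumUpto (fun k => (u i k)^2) d) N <=
  INR N ^ 2 * sumUpto (fun a => sumUpto (fun b => w a b * sumUpto (fun k => (u a k - u b k)^2) d) N) N.
Proof. intros HN Hw HR Hc Hm.
  set (W := sumUpto (fun a => sumUpto (fun b => w a b * sumUpto (fun k => (u a k - u b k)^2) d) N) N).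
  assert (HNp : 0 < INR N) by (apply lt_0_INR; lia).
  assert (Pair : forall i j, (i < N)%nat -> (j < N)%nat -> sumUpto (fun k => (u i k - u j k)^2) d <= INR N * W).
  { intros i j Hi Hj. destruct (Hc i j Hi Hj) as [p0 [Hn0 [Hp0 [Hh0 Hl0]]]].
    destruct (loop_removal Rl p0 Hn0 Hp0) as [p [Hn [Hp [Hd [Hh [Hl _]]]]]].
    rewrite Hh0 in Hh. rewrite Hl0 in Hl.
    assert (Hin : forall x, In x p -> (x < N)%nat).
    { apply (path_in Rl N p Hp). intros a b Hab. destruct (HR a b Hab) as [? [? _]]. auto. rewrite Hh. auto. }
    assert (Hlen : INR (length p) <= INR N) by (apply le_INR; apply nodup_length; auto).
    apply Rle_trans with (sumUpto (fun k => INR (length p) * psum (fun a b => (u a k - u b k)^2) p) d).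
    { apply sumUpto_le. intros k Hk. rewrite <- Hh, <- Hl at 1. apply (CS_path (fun a => u a k) p Hn). }
    rewrite sumUpto_scal.
    rewrite <- (psum_sumUpto (fun k a b => (u a k - u b k)^2)).
    set (P := psum (fun a b => sumUpto (fun k => (u a k - u b k) ^ 2) d) p).
    assert (HP0 : 0 <= P) by (apply psum_nonneg; intros; apply sq_nonneg_sum).
    assert (HPW : P <= W).
    { apply Rle_trans with (psum (fun a b => w a b * sumUpto (fun k => (u a k - u b k)^2) d) p).
      - apply (psum_le Rl); auto. intros a b Hab. destruct (HR a b Hab) as [_ [_ H1]].
        pose proof (sq_nonneg_sum d (fun k => u a k - u b k)). nra.
      - eapply Rle_trans; [apply (psum_lsum _ _ N); auto|].
        intros; apply Rmult_le_pos; auto using sq_nonneg_sum.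
        apply lsum_nodup; auto. intros a Ha. apply sumUpto_nonneg. intros; apply Rmult_le_pos; auto using sq_nonneg_sum. }
    pose proof (pos_INR (length p)). nra. }
  assert (Hsum : sumUpto (fun i => sumUpto (fun j => sumUpto (fun k => (u i k - u j k)^2) d) N) N <= INR N * INR N * (INR N * W)).
  { apply Rle_trans with (sumUpto (fun i => sumUpto (fun j => INR N * W) N) N).
    apply sumUpto_le. intros i Hi. apply sumUpto_le. intros j Hj. auto.
    rewrite sumUpto_const, sumUpto_const. lra. }
  assert (Hid : sumUpto (fun i => sumUpto (fun j => sumUpto (fun k => (u i k - u j k)^2) d) N) N =
                2 * INR N * sumUpto (fun i => sumUpto (fun k => (u i k)^2) d) N).
  { transitivity (sumUpto (fun i => sumUpto (fun k => sumUpto (fun j => (u i k - u j k)^2) N) d) N).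
    { apply sumUpto_ext; intros. apply sumUpto_swap. }
    rewrite sumUpto_swap.
    transitivity (sumUpto (fun k => 2 * INR N * sumUpto (fun i => u i k ^ 2) N) d).
    { apply sumUpto_ext; intros k Hk. rewrite (dsum_var (fun i => u i k)). rewrite Hm by auto. ring. }
    rewrite sumUpto_scal. f_equal. apply sumUpto_swap. }
  rewrite Hid in Hsum.
  apply Rmult_le_reg_l with (INR N); auto. nra. Qed.

Lemma var_identity N d (u : nat -> nat -> R) :
  (forall k, (k < d)%nat -> sumUpto (fun i => u i k) N = 0) ->
  sumUpto (fun i => sumUpto (fun j => sumUpto (fun k => (u i k - u j k)^2) d) N) N =
  2 * INR N * sumUpto (fun i => sumUpto (fun k => (u i k)^2) d) N.
Proof. intros Hm.
  transitivity (sumUpto (fun i => sumUpto (fun k => sumUpto (fun j => (u i k - u j k)^2) N) d) N).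
  { apply sumUpto_ext; intros. apply sumUpto_swap. }
  rewrite sumUpto_swap.
  transitivity (sumUpto (fun k => 2 * INR N * sumUpto (fun i => u i k ^ 2) N) d).
  { apply sumUpto_ext; intros k Hk. rewrite (dsum_var (fun i => u i k)). rewrite Hm by auto. ring. }
  rewrite sumUpto_scal. f_equal. apply sumUpto_swap. Qed.

Lemma pathR_nth Rl : forall l, (forall m, (S m < length l)%nat -> Rl (nth m l 0%nat) (nth (S m) l 0%nat)) -> pathR Rl l.
Proof. induction l as [|a l IH]; intros H; simpl; auto. destruct l as [|b l]; auto. split.
  - apply (H 0%nat). simpl. lia.
  - apply IH. intros m Hm. apply (H (S m)). simpl in *. lia. Qed.

Lemma pathR_snoc Rl j : forall l, l <> nil -> pathR Rl l -> Rl (last l 0%nat) j -> pathR Rl (l ++ j :: nil).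
Proof. induction l as [|a l IH]; intros Hn Hp Hl; [congruence|]. destruct l as [|b l].
  - simpl in *. auto.
  - destruct Hp as [Hab Hp]. change ((a :: b :: l) ++ j :: nil) with (a :: ((b :: l) ++ j :: nil)).
    simpl. split; auto. apply IH; auto; congruence. Qed.

Section Detour.
Variables (N : nat) (D : nat -> nat -> R) (R0 : nat -> nat -> Prop) (r : R).
Hypothesis Dsym : forall a b, D a b = D b a.
Hypothesis Dtri : forall a b c, D a c <= D a b + D b c.
Hypothesis Drefl : forall a, D a a = 0.
Hypothesis R0N : forall a b, R0 a b -> (a < N)%nat /\ (b < N)%nat.
Hypothesis R0D : forall a b, R0 a b -> D a b <= 2 * r.

Definition Rs a b := (a < N)%nat /\ (b < N)%nat /\ 0 < D a b /\ D a b <= 2 * r.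

Lemma Dnonneg a b : 0 <= D a b.
Proof. pose proof (Dtri a b a). rewrite Drefl, (Dsym b a) in H. lra. Qed.

Lemma exit_lemma : forall p, pathR R0 p -> p <> nil -> 0 < D (hd 0%nat p) (last p 0%nat) ->
  exists q, (q < N)%nat /\ 0 < D (hd 0%nat p) q /\ D (hd 0%nat p) q <= 2 * r.
Proof. induction p as [|x p IH]; intros Hp Hn HD; [congruence|]. destruct p as [|y p].
  - simpl in HD. rewrite Drefl in HD. lra.
  - destruct Hp as [Hxy Hp]. change (hd 0%nat (x :: y :: p)) with x in *.
    change (last (x :: y :: p) 0%nat) with (last (y :: p) 0%nat) in HD.
    destruct (Rlt_or_le 0 (D x y)) as [Hpos|Hz].
    + exists y. destruct (R0N x y Hxy). repeat split; auto.
    + assert (Hz' : D x y = 0) by (pose proof (Dnonneg x y); lra).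
      destruct (IH Hp ltac:(congruence)) as [q [Hq [H1 H2]]].
      { simpl hd. pose proof (Dtri x y (last (y :: p) 0%nat)). lra. }
      simpl hd in *. exists q. 
      assert (D x q = D y q).
      { pose proof (Dtri x y q). pose proof (Dtri y x q). rewrite Dsym in Hz'. lra. }
      rewrite H. auto. Qed.

Lemma detour (conn : forall i j, (i < N)%nat -> (j < N)%nat -> exists p, p <> nil /\ pathR R0 p /\ hd 0%nat p = i /\ last p 0%nat = j)
  (a0 b0 : nat) (Ha0 : (a0 < N)%nat) (Hb0 : (b0 < N)%nat) (Hab : 0 < D a0 b0) :
  forall i j, (i < N)%nat -> (j < N)%nat -> exists p, p <> nil /\ pathR Rs p /\ hd 0%nat p = i /\ last p 0%nat = j.
Proof.
  assert (Q : forall a, (a < N)%nat -> exists q, (q < N)%nat /\ 0 < D a q /\ D a q <= 2 * r).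
  { intros a Ha. assert (exists c, (c < N)%nat /\ 0 < D a c) as [c [Hc Hac]].
    { destruct (Rlt_or_le 0 (D a a0)). exists a0; auto.
      exists b0. split; auto. pose proof (Dtri a0 a b0). rewrite (Dsym a0 a) in H0. pose proof (Dtri a a a0). lra. }
    destruct (conn a c Ha Hc) as [p [Hn [Hp [Hh Hl]]]].
    destruct (exit_lemma p Hp Hn ltac:(rewrite Hh, Hl; auto)) as [q [Hq [H1 H2]]].
    rewrite Hh in *. eauto. }
  assert (T : forall p, pathR R0 p -> p <> nil -> (hd 0%nat p < N)%nat ->
      exists p', p' <> nil /\ pathR Rs p' /\ hd 0%nat p' = hd 0%nat p /\ last p' 0%nat = last p 0%nat).
  { induction p as [|x p IH]; intros Hp Hn Hh; [congruence|]. destruct p as [|y p].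
    - exists (x :: nil). repeat split; auto; congruence.
    - destruct Hp as [Hxy Hp]. destruct (R0N x y Hxy) as [Hx Hy].
      destruct (IH Hp ltac:(congruence) Hy) as [p'' [Hn'' [Hp'' [Hh'' Hl'']]]].
      destruct p'' as [|y' p'']; [congruence|]. simpl in Hh''. subst y'.
      destruct (Rlt_or_le 0 (D x y)) as [Hpos|Hz].
      + exists (x :: y :: p''). split; [congruence|]. split; [split; [unfold Rs; repeat split; auto|exact Hp'']|].
        split; [reflexivity|]. change (last (y :: p'') 0%nat = last (y :: p) 0%nat). auto.
      + destruct (Q x Hx) as [q [Hq [H1 H2]]].
        assert (D y q = D x q).
        { pose proof (Dtri x y q). pose proof (Dtri y x q). pose proof (Dsym x y). pose proof (Dnonneg x y). lra. }
        exists (x :: q :: y :: p''). split; [congruence|]. split.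
        { split; [unfold Rs; repeat split; auto|]. split; [|exact Hp'']. unfold Rs; repeat split; auto; rewrite Dsym; lra. }
        split; [reflexivity|]. change (last (y :: p'') 0%nat = last (y :: p) 0%nat). auto. }
  intros i j Hi Hj. destruct (conn i j Hi Hj) as [p [Hn [Hp [Hh Hl]]]].
  destruct (T p Hp Hn ltac:(rewrite Hh; auto)) as [p' [? [? [? ?]]]]. exists p'. repeat split; congruence. Qed.
End Detour.

Lemma cn_limit f t : cont_nonneg f t <-> limit1_in f (fun s => 0 <= s) (f t) t.
Proof. unfold cont_nonneg, limit1_in, limit_in. simpl. unfold R_dist. split; intros H eps He.
  - destruct (H eps He) as [d [Hd H']]. exists d. split; auto. intros s [Hs1 Hs2]. auto.
  - destruct (H eps He) as [d [Hd H']]. exists d. split; auto. Qed.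

Lemma cn_plus f g t : cont_nonneg f t -> cont_nonneg g t -> cont_nonneg (fun s => f s + g s) t.
Proof. rewrite !cn_limit. intros. apply limit_plus; auto. Qed.
Lemma cn_minus f g t : cont_nonneg f t -> cont_nonneg g t -> cont_nonneg (fun s => f s - g s) t.
Proof. rewrite !cn_limit. intros. apply limit_minus; auto. Qed.
Lemma cn_mult f g t : cont_nonneg f t -> cont_nonneg g t -> cont_nonneg (fun s => f s * g s) t.
Proof. rewrite !cn_limit. intros. apply limit_mul; auto. Qed.
Lemma cn_const c t : cont_nonneg (fun _ => c) t.
Proof. intros eps He. exists 1. split; [lra|]. intros. rewrite Rminus_diag, Rabs_R0. auto. Qed.
Lemma cn_ext f g t : (forall s, f s = g s) -> cont_nonneg f t -> cont_nonneg g t.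
Proof. intros E H eps He. destruct (H eps He) as [d [Hd H']]. exists d. split; auto. intros. rewrite <- !E. auto. Qed.
Lemma cn_sum (f : nat -> R -> R) n t : (forall m, (m < n)%nat -> cont_nonneg (f m) t) ->
  cont_nonneg (fun s => sumUpto (fun m => f m s) n) t.
Proof. induction n; simpl; intros H. apply cn_const. apply cn_plus; auto. Qed.
Lemma cn_cont f t : continuity_pt f t -> cont_nonneg f t.
Proof. intros H eps He. destruct (H eps He) as [d [Hd H']]. exists d. split; auto. intros s Hs Hst.
  destruct (Req_dec s t). subst. rewrite Rminus_diag, Rabs_R0. auto.
  apply (H' s). split. split; auto. constructor. auto. Qed.
Lemma cn_pow2 f t : cont_nonneg f t -> cont_nonneg (fun s => (f s)^2) t.
Proof. intros H. apply cn_ext with (fun s => f s * f s). intros; ring. apply cn_mult; auto. Qed.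

Lemma dpl_ext f g x l : (forall s, f s = g s) -> derivable_pt_lim f x l -> derivable_pt_lim g x l.
Proof. intros E H eps He. destruct (H eps He) as [d Hd]. exists d. intros. rewrite <- !E. auto. Qed.

Lemma dpl_sum (f : nat -> R -> R) (df : nat -> R) n t : (forall m, (m < n)%nat -> derivable_pt_lim (f m) t (df m)) ->
  derivable_pt_lim (fun s => sumUpto (fun m => f m s) n) t (sumUpto df n).
Proof. induction n; simpl; intros H.
  - apply dpl_ext with (fct_cte 0). reflexivity. apply derivable_pt_lim_const.
  - apply dpl_ext with ((fun s => sumUpto (fun m => f m s) n) + f n)%F. reflexivity.
    apply derivable_pt_lim_plus; auto. Qed.

Lemma dpl_mult f g x l1 l2 : derivable_pt_lim f x l1 -> derivable_pt_lim g x l2 ->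
  derivable_pt_lim (fun s => f s * g s) x (l1 * g x + f x * l2).
Proof. intros. apply dpl_ext with (f * g)%F. reflexivity. apply derivable_pt_lim_mult; auto. Qed.
Lemma dpl_plus f g x l1 l2 : derivable_pt_lim f x l1 -> derivable_pt_lim g x l2 ->
  derivable_pt_lim (fun s => f s + g s) x (l1 + l2).
Proof. intros. apply dpl_ext with (f + g)%F. reflexivity. apply derivable_pt_lim_plus; auto. Qed.
Lemma dpl_minus f g x l1 l2 : derivable_pt_lim f x l1 -> derivable_pt_lim g x l2 ->
  derivable_pt_lim (fun s => f s - g s) x (l1 - l2).
Proof. intros. apply dpl_ext with (f - g)%F. reflexivity. apply derivable_pt_lim_minus; auto. Qed.
Lemma dpl_const c x : derivable_pt_lim (fun _ => c) x 0.
Proof. apply dpl_ext with (fct_cte c). reflexivity. apply derivable_pt_lim_const. Qed.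
Lemma dpl_lin a x : derivable_pt_lim (fun s => a * s) x a.
Proof. apply dpl_ext with (mult_real_fct a id). reflexivity.
  replace a with (a * 1) at 2 by ring. apply derivable_pt_lim_scal. apply derivable_pt_lim_id. Qed.
Lemma dpl_exp_lin a x : derivable_pt_lim (fun s => exp (a * s)) x (a * exp (a * x)).
Proof. apply dpl_ext with (comp exp (fun s => a * s)). reflexivity.
  replace (a * exp (a * x)) with (exp (a * x) * a) by ring. apply derivable_pt_lim_comp. apply dpl_lin. apply derivable_pt_lim_exp. Qed.
Lemma dpl_sq f x l : derivable_pt_lim f x l -> derivable_pt_lim (fun s => (f s)^2) x (2 * f x * l).
Proof. intros H. apply dpl_ext with (fun s => f s * f s). intros; ring.
  replace (2 * f x * l) with (l * f x + f x * l) by ring. apply dpl_mult; auto. Qed.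
Lemma dpl_scal c f x l : derivable_pt_lim f x l -> derivable_pt_lim (fun s => c * f s) x (c * l).
Proof. intros H. replace (c * l) with (0 * f x + c * l) by ring. apply (dpl_mult (fun _ => c) f). apply dpl_const. auto. Qed.

Lemma cn_exp_lin a t : cont_nonneg (fun s => exp (a * s)) t.
Proof. apply cn_cont. apply derivable_continuous_pt. exists (a * exp (a * t)). apply dpl_exp_lin. Qed.

Lemma MON f df a b : 0 <= a -> a < b -> cont_nonneg f a ->
  (forall c, a < c <= b -> derivable_pt_lim f c (df c)) ->
  (forall c, a < c < b -> df c <= 0) -> f b <= f a.
Proof. intros Ha Hab Hc Hd Hneg. destruct (Rle_or_lt (f b) (f a)) as [|Hgt]; auto. exfalso.
  destruct (Hc (f b - f a) ltac:(lra)) as [del [Hdel H]].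
  set (a' := a + Rmin del (b - a) / 2).
  assert (Ha1 : a < a') by (unfold a'; pose proof (Rmin_glb_lt del (b - a) 0); lra).
  assert (Ha2 : a' < b) by (unfold a'; pose proof (Rmin_r del (b - a)); lra).
  assert (Ha3 : a' - a < del) by (unfold a'; pose proof (Rmin_l del (b - a)); pose proof (Rmin_glb_lt del (b - a) 0); lra).
  destruct (MVT_cor2 f df a' b Ha2 ltac:(intros; apply Hd; lra)) as [c [Hc1 Hc2]].
  specialize (Hneg c ltac:(lra)). specialize (H a' ltac:(lra) ltac:(rewrite Rabs_right; lra)).
  apply Rabs_def2 in H. nra. Qed.

Lemma real_ind (P : R -> Prop) :
  (forall T, 0 <= T -> (forall s, 0 <= s < T -> P s) -> P T) ->
  (forall T, 0 <= T -> (forall s, 0 <= s <= T -> P s) -> exists del, 0 < del /\ forall s, T <= s <= T + del -> P s) ->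
  forall t, 0 <= t -> P t.
Proof. intros H1 H2 t0 Ht0. apply NNPP. intros Hnot.
  set (E := fun T => 0 <= T <= t0 /\ forall s, 0 <= s < T -> P s).
  assert (Hb : bound E) by (exists t0; intros x [Hx _]; lra).
  assert (He : exists x, E x) by (exists 0; split; [lra|]; intros; lra).
  destruct (completeness E Hb He) as [m [Hub Hlub]].
  assert (Hm0 : 0 <= m) by (apply Hub; split; [lra|intros; lra]).
  assert (Hmt : m <= t0) by (apply Hlub; intros x [Hx _]; lra).
  assert (Hbelow : forall s, 0 <= s < m -> P s).
  { intros s Hs. apply NNPP. intros Hns.
    assert (forall x, E x -> x <= s).
    { intros x [Hx Hx']. destruct (Rle_or_lt x s); auto. exfalso. apply Hns. apply Hx'. lra. }
    assert (m <= s) by (apply Hlub; auto). lra. }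
  assert (Pm : P m) by (apply H1; auto).
  destruct (Req_dec m t0) as [Eq|Neq]. subst. contradiction.
  destruct (H2 m Hm0 ltac:(intros s Hs; destruct (Req_dec s m); [subst; auto| apply Hbelow; lra])) as [del [Hdel H]].
  assert (E (Rmin (m + del) t0)).
  { split. split; [apply Rmin_glb; lra|apply Rmin_r].
    intros s Hs. destruct (Rlt_or_le s m). apply Hbelow; lra. apply H. pose proof (Rmin_l (m + del) t0). lra. }
  apply Hub in H0. unfold Rmin in H0. destruct (Rle_dec (m + del) t0); lra. Qed.

Section Main.
Variables (torus : bool) (d N : nat) (phi : R -> R) (kappa r : R) (x v : nat -> R -> vec).
Hypothesis HN : (1 <= N)%nat.
Hypothesis Hphi0 : forall h, 0 <= h -> 0 <= phi h.
Hypothesis Hk : 0 < kappa.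
Hypothesis Hr : 0 < r.
Hypothesis Hphi1 : forall h, 0 < h <= 2 * r -> 1 <= phi h.
Hypothesis Hsol : CS_solution torus d N phi kappa x v.

Definition dst s a b := dist_Omega torus d (x a s) (x b s).
Definition vb := vbar0 N v.
Definition u a s k := v a s k - vb k.
Definition FF s := sumUpto (fun i => sumUpto (fun k => (u i s k)^2) d) N.
Definition WW s := sumUpto (fun a => sumUpto (fun b => phi (dst s a b) * sumUpto (fun k => (u a s k - u b s k)^2) d) N) N.
Definition lam := 2 * kappa / INR N ^ 3.
Definition GG s := FF s * exp (lam * s).

Lemma INRN_pos : 0 < INR N.
Proof. apply lt_0_INR. lia. Qed.

Lemma lam_pos : 0 < lam.
Proof. unfold lam. pose proof INRN_pos. apply Rdiv_lt_0_compat; [lra|]. apply pow_lt; auto. Qed.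

Lemma dst_sym s a b : dst s a b = dst s b a.
Proof. apply DO_sym. Qed.

Lemma FF_nonneg s : 0 <= FF s.
Proof. apply sumUpto_nonneg; intros. apply sq_nonneg_sum. Qed.

Lemma WW_nonneg s : 0 <= WW s.
Proof. apply sumUpto_nonneg; intros. apply sumUpto_nonneg; intros. apply Rmult_le_pos.
  apply Hphi0, DO_nonneg. apply sq_nonneg_sum. Qed.

Lemma x_der i k t : (i < N)%nat -> (k < d)%nat -> 0 < t -> derivable_pt_lim (fun s => x i s k) t (v i t k).
Proof. intros. apply (Hsol i k H H0). auto. Qed.

Lemma v_der i k t : (i < N)%nat -> (k < d)%nat -> 0 < t -> derivable_pt_lim (fun s => v i s k) t
   (kappa / INR N * sumUpto (fun j => phi (dst t i j) * (v j t k - v i t k)) N).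
Proof. intros. apply (Hsol i k H H0). auto. Qed.

Lemma x_cont i k t : (i < N)%nat -> (k < d)%nat -> 0 <= t -> cont_nonneg (fun s => x i s k) t.
Proof. intros. apply (Hsol i k H H0). auto. Qed.

Lemma v_cont i k t : (i < N)%nat -> (k < d)%nat -> 0 <= t -> cont_nonneg (fun s => v i s k) t.
Proof. intros. apply (Hsol i k H H0). auto. Qed.

Lemma FF_cont t : 0 <= t -> cont_nonneg FF t.
Proof. intros Ht. unfold FF. apply cn_sum; intros i Hi. apply cn_sum; intros k Hk'. apply cn_pow2.
  unfold u. apply cn_minus. apply v_cont; auto. apply cn_const. Qed.

Lemma GG_cont t : 0 <= t -> cont_nonneg GG t.
Proof. intros. unfold GG. apply cn_mult. apply FF_cont; auto. apply cn_exp_lin. Qed.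

(* mean conservation *)
Lemma mean_zero s k : 0 <= s -> (k < d)%nat -> sumUpto (fun i => u i s k) N = 0.
Proof. intros Hs Hkd.
  set (S := fun t => sumUpto (fun i => v i t k) N).
  assert (Hder : forall c, 0 < c -> derivable_pt_lim S c 0).
  { intros c Hc. unfold S.
    replace 0 with (sumUpto (fun i => kappa / INR N * sumUpto (fun j => phi (dst c i j) * (v j c k - v i c k)) N) N).
    apply dpl_sum. intros m Hm. apply v_der; auto.
    rewrite sumUpto_scal. rewrite (dsum_antisym (fun i j => phi (dst c i j)) (fun i => v i c k)). ring.
    intros. rewrite dst_sym. auto. }
  assert (HS : S s = S 0).
  { destruct (Req_dec s 0). subst; auto.
    assert (Hc : cont_nonneg S 0) by (apply cn_sum; intros; apply v_cont; auto; lra).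
    apply Rle_antisym.
    - apply (MON S (fun _ => 0) 0 s); auto; try lra. intros; apply Hder; lra. intros; lra.
    - assert (- S s <= - S 0); [|lra].
      apply (MON (fun t => - S t) (fun _ => - 0) 0 s); auto; try lra.
      apply cn_ext with (fun t => 0 - S t). intros; ring. apply cn_minus; auto. apply cn_const.
      intros c Hc'. apply dpl_ext with (fun t => 0 - S t). intros; ring.
      replace (- 0) with (0 - 0) by ring. apply dpl_minus. apply dpl_const. apply Hder; lra. intros; lra. }
  unfold u. rewrite sumUpto_minus, sumUpto_const. fold (S s). rewrite HS.
  unfold vb, vbar0. fold (S 0). field. apply Rgt_not_eq. apply INRN_pos. Qed.

Lemma FF_der s : 0 < s -> derivable_pt_lim FF s (- (kappa / INR N) * WW s).
Proof. intros Hs.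
  set (c := kappa / INR N).
  assert (D1 : derivable_pt_lim FF s (sumUpto (fun i => sumUpto (fun k =>
      2 * u i s k * (c * sumUpto (fun j => phi (dst s i j) * (v j s k - v i s k)) N - 0)) d) N)).
  { unfold FF. apply dpl_sum; intros i Hi. apply dpl_sum; intros k Hkd. apply (dpl_sq (fun t => v i t k - vb k)).
    apply dpl_minus. apply v_der; auto. apply dpl_const. }
  apply dpl_ext with FF; [auto|]. replace (- c * WW s) with
    (sumUpto (fun i => sumUpto (fun k => 2 * u i s k * (c * sumUpto (fun j => phi (dst s i j) * (v j s k - v i s k)) N - 0)) d) N); auto.
  set (q := fun i j => phi (dst s i j) * sumUpto (fun k => u i s k * (u j s k - u i s k)) d).
  transitivity (2 * c * sumUpto (fun i => sumUpto (fun j => q i j) N) N).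
  { rewrite <- sumUpto_scal. apply sumUpto_ext; intros i Hi.
    transitivity (2 * c * sumUpto (fun k => sumUpto (fun j => u i s k * (phi (dst s i j) * (u j s k - u i s k))) N) d).
    { rewrite <- sumUpto_scal. apply sumUpto_ext; intros k Hkd. rewrite <- sumUpto_scal.
      rewrite Rminus_0_r. rewrite <- sumUpto_scal, <- sumUpto_scal. apply sumUpto_ext; intros j Hj.
      unfold u. ring. }
    f_equal. rewrite sumUpto_swap. apply sumUpto_ext; intros j Hj. unfold q. rewrite <- sumUpto_scal.
    apply sumUpto_ext; intros. ring. }
  rewrite dsum_sym.
  assert (Hq : forall i j, q i j + q j i = -1 * (phi (dst s i j) * sumUpto (fun k => (u i s k - u j s k) ^ 2) d)).
  { intros i j. unfold q. rewrite (dst_sym s j i).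
    transitivity (phi (dst s i j) * sumUpto (fun k => -1 * (u i s k - u j s k)^2) d).
    { rewrite <- Rmult_plus_distr_l, <- sumUpto_plus. f_equal. apply sumUpto_ext; intros; ring. }
    rewrite sumUpto_scal. ring. }
  replace (sumUpto (fun i => sumUpto (fun j => q i j + q j i) N) N) with
    (sumUpto (fun i => -1 * sumUpto (fun j => phi (dst s i j) * sumUpto (fun k => (u i s k - u j s k) ^ 2) d) N) N).
  rewrite sumUpto_scal. unfold WW. unfold c. field. apply Rgt_not_eq. apply INRN_pos.
  apply sumUpto_ext; intros i Hi. rewrite <- sumUpto_scal. apply sumUpto_ext; intros j Hj. symmetry. apply Hq. Qed.

Lemma GG_der s : 0 < s -> derivable_pt_lim GG s ((- (kappa / INR N) * WW s + lam * FF s) * exp (lam * s)).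
Proof. intros Hs. unfold GG. replace ((- (kappa / INR N) * WW s + lam * FF s) * exp (lam * s)) with
   ((- (kappa / INR N) * WW s) * exp (lam * s) + FF s * (lam * exp (lam * s))) by ring.
  apply (dpl_mult FF (fun t => exp (lam * t))). apply FF_der; auto. apply dpl_exp_lin. Qed.

Lemma last_In' (l : list nat) : l <> nil -> In (last l 0%nat) l.
Proof. induction l as [|a l IH]; intros H; [congruence|]. destruct l as [|b l]. simpl; auto.
  right. apply IH. congruence. Qed.

Definition R0 a b := (a < N)%nat /\ (b < N)%nat /\ dst 0 a b <= r.

Lemma conn0 : chain_connected torus d N (fun i => x i 0) r ->
  forall i j, (i < N)%nat -> (j < N)%nat -> exists p, p <> nil /\ pathR R0 p /\ hd 0%nat p = i /\ last p 0%nat = j.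
Proof. intros Hch i j Hi Hj. destruct (Hch i j Hi Hj) as [cs [Hn [Hf [H1 [H2 H3]]]]].
  rewrite Forall_forall in Hf.
  assert (Hcs : pathR R0 cs).
  { apply pathR_nth. intros m Hm. destruct (H3 m Hm) as [z [Hz1 Hz2]].
    split; [apply Hf, nth_In; lia|]. split; [apply Hf, nth_In; lia|].
    unfold dst. eapply Rle_trans; [apply (DO_tri _ _ _ z)|]. rewrite DO_sym. lra. }
  exists (i :: cs ++ j :: nil). split; [congruence|]. split.
  - destruct cs as [|c cs']; [congruence|]. change (i :: (c :: cs') ++ j :: nil) with (i :: c :: (cs' ++ j :: nil)).
    split. 
    + split; auto. split. apply Hf; simpl; auto. unfold dst. simpl in H1. lra.
    + change (c :: cs' ++ j :: nil) with ((c :: cs') ++ j :: nil). apply pathR_snoc; auto; try congruence.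
      split. apply Hf. apply last_In'. congruence. split; auto. unfold dst. rewrite DO_sym. lra.
  - split; auto. rewrite app_comm_cons. apply last_last. Qed.

Lemma GG_der_nonpos s : 0 < s ->
  (forall i j, (i < N)%nat -> (j < N)%nat -> exists p, p <> nil /\ pathR R0 p /\ hd 0%nat p = i /\ last p 0%nat = j) ->
  (forall a b, R0 a b -> dst s a b <= 2 * r) ->
  (exists a0 b0, (a0 < N)%nat /\ (b0 < N)%nat /\ 0 < dst s a0 b0) ->
  (- (kappa / INR N) * WW s + lam * FF s) * exp (lam * s) <= 0.
Proof. intros Hs Hc HR [a0 [b0 [Ha0 [Hb0 Hab]]]].
  assert (P : 2 * FF s <= INR N ^ 2 * WW s).
  { unfold FF, WW. apply (poincare N d (fun i k => u i s k) (fun a b => phi (dst s a b)) (Rs N (dst s) r)); auto.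
    - intros. apply Hphi0, DO_nonneg.
    - intros a b [Ha [Hb [H1 H2]]]. repeat split; auto.
    - apply (detour N (dst s) R0 r) with a0 b0; auto.
      + intros; apply dst_sym.
      + intros; apply DO_tri.
      + intros; apply DO_refl.
      + intros a b [? [? ?]]; auto.
    - intros k Hkd. apply mean_zero; auto; lra. }
  assert (lam * FF s <= kappa / INR N * WW s).
  { pose proof INRN_pos. unfold lam.
    replace (2 * kappa / INR N ^ 3 * FF s) with (kappa / INR N ^ 3 * (2 * FF s)) by (field; lra).
    replace (kappa / INR N * WW s) with (kappa / INR N ^ 3 * (INR N ^ 2 * WW s)) by (field; lra).
    apply Rmult_le_compat_l; auto. apply Rlt_le, Rdiv_lt_0_compat; auto. apply pow_lt; auto. }
  pose proof (exp_pos (lam * s)). nra. Qed.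

Lemma exp_half a : exp (a / 2) ^ 2 = exp a.
Proof. simpl. rewrite Rmult_1_r, <- exp_plus. f_equal. field. Qed.

Lemma FF_decay c : GG c <= FF 0 -> FF c <= FF 0 * exp (- lam * c).
Proof. intros H. unfold GG in H. pose proof (exp_pos (lam * c)).
  replace (FF c) with (FF c * exp (lam * c) * exp (- lam * c)).
  apply Rmult_le_compat_r; auto. apply Rlt_le, exp_pos.
  rewrite Rmult_assoc, <- exp_plus. replace (lam * c + - lam * c) with 0 by ring. rewrite exp_0. ring. Qed.

Lemma diff_bound c a b : (a < N)%nat -> (b < N)%nat ->
  sumUpto (fun k => (v a c k - v b c k)^2) d <= 4 * FF c.
Proof. intros Ha Hb.
  apply Rle_trans with (sumUpto (fun k => 2 * (u a c k)^2 + 2 * (u b c k)^2) d).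
  { apply sumUpto_le; intros. unfold u. pose proof (pow2_ge_0 (v a c i + v b c i - 2 * vb i)). nra. }
  rewrite sumUpto_plus, !sumUpto_scal.
  pose proof (sumUpto_term (fun i => sumUpto (fun k => (u i c k)^2) d) N a ltac:(intros; apply sq_nonneg_sum) Ha).
  pose proof (sumUpto_term (fun i => sumUpto (fun k => (u i c k)^2) d) N b ltac:(intros; apply sq_nonneg_sum) Hb).
  unfold FF. simpl in *. lra. Qed.

Lemma drift T a b : 0 <= T -> (forall s, 0 <= s <= T -> GG s <= FF 0) -> (a < N)%nat -> (b < N)%nat ->
  N2 d (fun k => (x a T k - x b T k) - (x a 0 k - x b 0 k)) <= 4 * sqrt (FF 0) / lam.
Proof. intros HT HG Ha Hb.
  set (e := fun k => (x a T k - x b T k) - (x a 0 k - x b 0 k)).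
  set (E := N2 d e). set (F0 := FF 0).
  assert (HE : 0 <= E) by apply N2_nonneg.
  assert (HF0 : 0 <= F0) by apply FF_nonneg.
  pose proof lam_pos as Hl.
  assert (HK0 : 0 <= 4 * E * sqrt F0 / lam).
  { unfold Rdiv. apply Rmult_le_pos; [apply Rmult_le_pos; [lra| apply sqrt_pos]| apply Rlt_le, Rinv_0_lt_compat; auto]. }
  assert (Key : E ^ 2 <= 4 * E * sqrt F0 / lam).
  { destruct (Req_dec T 0) as [T0|T0].
    - replace (E ^ 2) with 0; auto. subst T. unfold E, e. rewrite N2_sq. rewrite (sumUpto_ext _ (fun _ => 0)).
      rewrite sumUpto_zero; auto. intros; ring.
    - set (K := 4 * E * sqrt F0 / lam).
      set (H := fun s => sumUpto (fun k => e k * ((x a s k - x b s k) - (x a 0 k - x b 0 k))) d + K * exp ((- lam / 2) * s)).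
      set (dH := fun c => sumUpto (fun k => e k * ((v a c k - v b c k) - 0)) d + K * ((- lam / 2) * exp ((- lam / 2) * c))).
      assert (HM : H T <= H 0).
      { apply (MON H dH 0 T); auto; try lra.
        - unfold H. apply cn_plus. apply cn_sum; intros k Hkd. apply cn_mult. apply cn_const.
          apply cn_minus. apply cn_minus; apply x_cont; auto; lra. apply cn_const.
          apply cn_mult. apply cn_const. apply cn_exp_lin.
        - intros c Hc. unfold H, dH. apply dpl_plus.
          + apply (dpl_sum (fun k s => e k * (x a s k - x b s k - (x a 0 k - x b 0 k)))). intros k Hkd.
            apply dpl_scal. apply dpl_minus. apply dpl_minus; apply x_der; auto; lra. apply dpl_const.
          + apply dpl_scal. apply dpl_exp_lin.
        - intros c Hc. unfold dH.
          set (w := fun k => v a c k - v b c k - 0).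
          assert (C1 : sumUpto (fun k => e k * w k) d <= E * N2 d w) by apply CS.
          assert (C2 : N2 d w <= 2 * sqrt F0 * exp ((- lam / 2) * c)).
          { apply sq_le_inv. apply N2_nonneg. pose proof (sqrt_pos F0). pose proof (exp_pos ((- lam / 2) * c)). 
            apply Rmult_le_pos; lra.
            rewrite N2_sq. replace ((2 * sqrt F0 * exp (- lam / 2 * c)) ^ 2) with (4 * (sqrt F0)^2 * exp (- lam / 2 * c) ^ 2) by ring.
            rewrite pow2_sqrt by auto. replace (- lam / 2 * c) with ((- lam * c) / 2) by field. rewrite exp_half.
            apply Rle_trans with (4 * FF c). unfold w. 
            rewrite (sumUpto_ext _ (fun k => (v a c k - v b c k)^2)). apply diff_bound; auto. intros; ring.
            pose proof (FF_decay c ltac:(apply HG; lra)). fold F0 in H0. lra. }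
          assert (C3 : K * (- lam / 2 * exp (- lam / 2 * c)) = - (2 * E * sqrt F0 * exp ((- lam / 2) * c))).
          { unfold K. field. lra. }
          rewrite C3. change (sumUpto (fun k => e k * (v a c k - v b c k - 0)) d) with (sumUpto (fun k => e k * w k) d).
          assert (E * N2 d w <= E * (2 * sqrt F0 * exp ((- lam / 2) * c))) by (apply Rmult_le_compat_l; auto). lra. }
      unfold H in HM. 
      rewrite (sumUpto_ext (fun k => e k * (x a 0 k - x b 0 k - (x a 0 k - x b 0 k))) (fun _ => 0)) in HM by (intros; ring).
      rewrite sumUpto_zero, Rmult_0_r, exp_0 in HM.
      fold (e) in HM. 
      assert (sumUpto (fun k => e k * e k) d = E ^ 2).
      { unfold E. rewrite N2_sq. apply sumUpto_ext. intros; ring. }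
      change (sumUpto (fun k : nat => e k * (x a T k - x b T k - (x a 0 k - x b 0 k))) d) with (sumUpto (fun k => e k * e k) d) in HM.
      rewrite H0 in HM. pose proof (exp_pos (- lam / 2 * T)).
      unfold K in *. nra. }
  destruct (Req_dec E 0) as [E0|E0].
  - fold E. rewrite E0. unfold Rdiv. apply Rmult_le_pos; [apply Rmult_le_pos; [lra| apply sqrt_pos]| apply Rlt_le, Rinv_0_lt_compat; auto].
  - fold E. apply Rmult_le_reg_l with E. lra. replace (E * (4 * sqrt F0 / lam)) with (4 * E * sqrt F0 / lam) by (field; lra).
    replace (E * E) with (E ^ 2) by ring. auto. Qed.

Lemma unif (n : nat) (Q : nat -> R -> Prop) T :
  (forall m, (m < n)%nat -> exists del, 0 < del /\ forall s, T <= s <= T + del -> Q m s) ->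
  exists del, 0 < del /\ forall s, T <= s <= T + del -> forall m, (m < n)%nat -> Q m s.
Proof. induction n; intros H.
  - exists 1. split; [lra|]. intros; lia.
  - destruct IHn as [d1 [Hd1 H1]]. intros; apply H; lia.
    destruct (H n ltac:(lia)) as [d2 [Hd2 H2]].
    exists (Rmin d1 d2). split. apply Rmin_glb_lt; auto.
    intros s Hs m Hm. pose proof (Rmin_l d1 d2). pose proof (Rmin_r d1 d2).
    destruct (Nat.eq_dec m n). subst. apply H2; lra. apply H1; [lra|lia]. Qed.

Lemma cont_closed f T eta : 0 <= T -> 0 < eta -> cont_nonneg f T ->
  exists del, 0 < del /\ forall s, T <= s <= T + del -> Rabs (f s - f T) <= eta.
Proof. intros HT He Hc. destruct (Hc eta He) as [d0 [Hd0 H]]. exists (d0 / 2). split; [lra|].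
  intros s Hs. apply Rlt_le, H. lra. rewrite Rabs_right; lra. Qed.

Lemma pair_near T eta : 0 <= T -> 0 < eta ->
  exists del, 0 < del /\ forall s, T <= s <= T + del -> forall a b, (a < N)%nat -> (b < N)%nat ->
    N2 d (fun k => (x a s k - x b s k) - (x a T k - x b T k)) <= eta.
Proof. intros HT He.
  pose proof (sqrt_pos (INR d)) as Hsd.
  set (eta' := eta / (2 * (sqrt (INR d) + 1))).
  assert (He' : 0 < eta') by (unfold eta'; apply Rdiv_lt_0_compat; lra).
  destruct (unif N (fun a s => forall k, (k < d)%nat -> Rabs (x a s k - x a T k) <= eta') T) as [del [Hdel H]].
  { intros a Ha. apply unif. intros k Hkd. apply cont_closed; auto. apply x_cont; auto. }
  exists del. split; auto. intros s Hs a b Ha Hb.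
  eapply Rle_trans. apply (N2_bound d _ (2 * eta')). lra.
  intros k Hkd. pose proof (H s Hs a Ha k Hkd). pose proof (H s Hs b Hb k Hkd).
  replace (x a s k - x b s k - (x a T k - x b T k)) with ((x a s k - x a T k) - (x b s k - x b T k)) by ring.
  eapply Rle_trans. apply Rabs_triang. rewrite Rabs_Ropp. lra.
  unfold eta'. apply Rle_trans with (eta * (sqrt (INR d) / (sqrt (INR d) + 1))).
  right. field. lra. rewrite <- (Rmult_1_r eta) at 2. apply Rmult_le_compat_l; [lra|].
  apply Rmult_le_reg_r with (sqrt (INR d) + 1). lra. unfold Rdiv. rewrite Rmult_assoc, Rinv_l; lra. Qed.

Lemma N2_ext d' w w' : (forall k, (k < d')%nat -> w k = w' k) -> N2 d' w = N2 d' w'.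
Proof. intros H. unfold N2. f_equal. apply sumUpto_ext. intros. rewrite H; auto. Qed.

Lemma N2_opp d' w : N2 d' (fun k => - w k) = N2 d' w.
Proof. unfold N2. f_equal. apply sumUpto_ext. intros. ring. Qed.

Lemma caseA T a0 b0 : 0 <= T -> (a0 < N)%nat -> (b0 < N)%nat -> 0 < dst T a0 b0 ->
  exists del, 0 < del /\ forall s, T <= s <= T + del -> 0 < dst s a0 b0.
Proof. intros HT Ha Hb Hp. destruct (pair_near T (dst T a0 b0 / 2) HT ltac:(lra)) as [del [Hdel H]].
  exists del. split; auto. intros s Hs. specialize (H s Hs a0 b0 Ha Hb).
  pose proof (DO_shift torus d (x a0 s) (x b0 s) (x a0 T) (x b0 T)).
  rewrite <- N2_opp in H0.
  rewrite (N2_ext d _ (fun k => x a0 s k - x b0 s k - (x a0 T k - x b0 T k))) in H0 by (intros; ring).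
  unfold dst in *. lra. Qed.

Lemma abs_le_inv a b : Rabs a <= b -> - b <= a <= b.
Proof. intros. pose proof (Rle_abs a). pose proof (Rle_abs (- a)). rewrite Rabs_Ropp in H1. lra. Qed.

Lemma caseB_pos T a b k : 0 <= T -> (a < N)%nat -> (b < N)%nat -> (k < d)%nat ->
  dst T a b = 0 -> 0 < v a T k - v b T k ->
  exists del, 0 < del /\ forall s, T < s <= T + del -> 0 < dst s a b.
Proof. intros HT Ha Hb Hkd H0 Hw. set (w := v a T k - v b T k) in *.
  destruct (cont_closed (fun t => v a t k - v b t k) T (w / 2) HT ltac:(lra)) as [d0 [Hd0 Hc]].
  { apply cn_minus; apply v_cont; auto. }
  exists (Rmin d0 (1 / (2 * w))). split. apply Rmin_glb_lt; auto. apply Rdiv_lt_0_compat; lra.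
  intros s Hs. pose proof (Rmin_l d0 (1 / (2 * w))). pose proof (Rmin_r d0 (1 / (2 * w))).
  set (Dl := fun t => x a t k - x b t k).
  assert (Hder : forall c, T < c <= s -> derivable_pt_lim Dl c (v a c k - v b c k)).
  { intros c Hc'. apply dpl_minus; apply x_der; auto; lra. }
  assert (Hcont : cont_nonneg Dl T) by (apply cn_minus; apply x_cont; auto).
  assert (Hvb : forall c, T < c < s -> w / 2 <= v a c k - v b c k <= 3 * w / 2).
  { intros c Hc'. specialize (Hc c ltac:(lra)). apply abs_le_inv in Hc. fold w in Hc. lra. }
  assert (L : (w / 2) * s - Dl s <= (w / 2) * T - Dl T).
  { apply (MON (fun t => (w / 2) * t - Dl t) (fun c => w / 2 - (v a c k - v b c k)) T s); auto; try lra.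
    apply cn_minus; auto. apply cn_mult. apply cn_const. apply cn_cont. apply derivable_continuous_pt.
    exists 1. apply dpl_ext with id; auto. apply derivable_pt_lim_id.
    intros c Hc'. apply dpl_minus; auto. apply dpl_lin.
    intros c Hc'. specialize (Hvb c Hc'). lra. }
  assert (U : Dl s - (3 * w / 2) * s <= Dl T - (3 * w / 2) * T).
  { apply (MON (fun t => Dl t - (3 * w / 2) * t) (fun c => (v a c k - v b c k) - 3 * w / 2) T s); auto; try lra.
    apply cn_minus; auto. apply cn_mult. apply cn_const. apply cn_cont. apply derivable_continuous_pt.
    exists 1. apply dpl_ext with id; auto. apply derivable_pt_lim_id.
    intros c Hc'. apply dpl_minus; auto. apply dpl_lin.
    intros c Hc'. specialize (Hvb c Hc'). lra. }
  assert (Hr0 : rho torus (Dl T) = 0) by (apply (DO_zero_coord torus d (x a T) (x b T) k); auto).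
  assert (Hh : 0 < Rabs (Dl s - Dl T) < 1).
  { assert (1 / (2 * w) * w = 1 / 2) by (field; lra).
    assert (0 < Dl s - Dl T <= 3 * w / 2 * (s - T)) by nra.
    rewrite Rabs_right by lra. split. lra.
    assert (s - T <= 1 / (2 * w)) by lra.
    assert (3 * w / 2 * (s - T) <= 3 * w / 2 * (1 / (2 * w))) by (apply Rmult_le_compat_l; lra).
    replace (3 * w / 2 * (1 / (2 * w))) with (3 / 4) in H5 by (field; lra). lra. }
  pose proof (rho_pos torus (Dl T) (Dl s - Dl T) Hr0 Hh) as HP.
  replace (Dl T + (Dl s - Dl T)) with (Dl s) in HP by ring.
  apply (DO_pos_coord torus d _ _ k Hkd). exact HP. Qed.

Lemma caseB T a b k : 0 <= T -> (a < N)%nat -> (b < N)%nat -> (k < d)%nat ->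
  dst T a b = 0 -> v a T k <> v b T k ->
  exists del, 0 < del /\ forall s, T < s <= T + del -> 0 < dst s a b.
Proof. intros HT Ha Hb Hkd H0 Hne. destruct (Rlt_or_le 0 (v a T k - v b T k)).
  - apply (caseB_pos T a b k); auto.
  - destruct (caseB_pos T b a k) as [del [Hdel Hd]]; auto. rewrite dst_sym; auto.
    assert (v a T k - v b T k <> 0) by lra. lra.
    exists del. split; auto. intros. rewrite dst_sym. auto. Qed.

Lemma FF_mono T s : 0 <= T -> T <= s -> FF s <= FF T.
Proof. intros HT Hs. destruct (Req_dec s T). subst; lra.
  apply (MON FF (fun c => - (kappa / INR N) * WW c) T s); auto; try lra.
  apply FF_cont; auto. intros; apply FF_der; lra.
  intros c Hc. pose proof (WW_nonneg c). pose proof INRN_pos.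
  assert (0 <= kappa / INR N) by (apply Rlt_le, Rdiv_lt_0_compat; auto). nra. Qed.

Lemma caseC T : 0 <= T -> (forall a b k, (a < N)%nat -> (b < N)%nat -> (k < d)%nat -> v a T k = v b T k) ->
  forall s, T <= s -> FF s = 0.
Proof. intros HT Heq s Hs.
  assert (FT : FF T = 0).
  { pose proof (var_identity N d (fun i k => u i T k) ltac:(intros; apply mean_zero; auto)) as E.
    rewrite (sumUpto_ext _ (fun _ => 0)) in E. rewrite sumUpto_zero in E. fold (FF T) in E.
    pose proof INRN_pos. nra.
    intros i Hi. rewrite (sumUpto_ext _ (fun _ => 0)). apply sumUpto_zero.
    intros j Hj. rewrite (sumUpto_ext _ (fun _ => 0)). apply sumUpto_zero.
    intros k Hkd. unfold u. rewrite (Heq i j k); auto. ring. }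
  pose proof (FF_mono T s HT Hs). pose proof (FF_nonneg s). lra. Qed.

Lemma main_bound : chain_connected torus d N (fun i => x i 0) r -> 4 * sqrt (FF 0) / lam <= r / 8 ->
  forall t, 0 <= t -> GG t <= FF 0.
Proof. intros Hch Hsmall. pose proof (conn0 Hch) as Hconn.
  apply (real_ind (fun s => GG s <= FF 0)).
  - intros T HT Hb. destruct (Req_dec T 0) as [T0|T0].
    + subst. unfold GG. rewrite Rmult_0_r, exp_0. lra.
    + destruct (Rle_or_lt (GG T) (FF 0)) as [|Hgt]; auto. exfalso.
      destruct (GG_cont T HT (GG T - FF 0) ltac:(lra)) as [del [Hdel H]].
      set (s := Rmax 0 (T - del / 2)).
      assert (0 <= s < T) by (unfold s; unfold Rmax; destruct (Rle_dec 0 (T - del / 2)); lra).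
      assert (Rabs (s - T) < del) by (unfold s, Rmax; destruct (Rle_dec 0 (T - del / 2)); rewrite Rabs_left; lra).
      specialize (H s ltac:(lra) H1). specialize (Hb s H0).
      apply Rabs_def2 in H. lra.
  - intros T HT Hb.
    assert (Hdr : forall a b, (a < N)%nat -> (b < N)%nat -> N2 d (fun k => (x a T k - x b T k) - (x a 0 k - x b 0 k)) <= r / 8).
    { intros. eapply Rle_trans; [apply drift|]; auto. }
    destruct (pair_near T (r / 8) HT ltac:(lra)) as [d1 [Hd1 Hnear]].
    assert (Hedge : forall s, T <= s <= T + d1 -> forall a b, R0 a b -> dst s a b <= 2 * r).
    { intros s Hs a b [Ha [Hb' H0]]. unfold dst in *.
      eapply Rle_trans; [apply (DO_shift torus d (x a 0) (x b 0))|].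
      eapply Rle_trans. apply Rplus_le_compat_l.
      rewrite (N2_ext d _ (fun k => ((x a s k - x b s k) - (x a T k - x b T k)) + ((x a T k - x b T k) - (x a 0 k - x b 0 k)))) by (intros; ring).
      apply N2_plus. specialize (Hnear s Hs a b Ha Hb'). specialize (Hdr a b Ha Hb'). lra. }
    assert (Hpos : (exists d2, 0 < d2 /\ forall s, T < s <= T + d2 -> exists a0 b0, (a0 < N)%nat /\ (b0 < N)%nat /\ 0 < dst s a0 b0)
                   \/ (forall a b k, (a < N)%nat -> (b < N)%nat -> (k < d)%nat -> v a T k = v b T k)).
    { destruct (classic (exists a0 b0, (a0 < N)%nat /\ (b0 < N)%nat /\ 0 < dst T a0 b0)) as [[a0 [b0 [Ha [Hb' Hp]]]]|Hn].
      - left. destruct (caseA T a0 b0 HT Ha Hb' Hp) as [d2 [Hd2 H]]. exists d2. split; auto.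
        intros s Hs. exists a0, b0. split; auto. split; auto. apply H. lra.
      - destruct (classic (exists a b k, (a < N)%nat /\ (b < N)%nat /\ (k < d)%nat /\ v a T k <> v b T k)) as [[a [b [k [Ha [Hb' [Hkd Hne]]]]]]|Hn2].
        + left. assert (dst T a b = 0).
          { destruct (Rle_lt_or_eq_dec 0 (dst T a b) (DO_nonneg _ _ _ _)); auto. exfalso. apply Hn. eauto. }
          destruct (caseB T a b k HT Ha Hb' Hkd H Hne) as [d2 [Hd2 H2]]. exists d2. split; auto.
          intros s Hs. exists a, b. auto.
        + right. intros a b k Ha Hb' Hkd. apply NNPP. intro. apply Hn2. exists a, b, k. auto. }
    destruct Hpos as [[d2 [Hd2 Hp]]|Hall].
    + exists (Rmin d1 d2). split. apply Rmin_glb_lt; auto.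
      pose proof (Rmin_l d1 d2). pose proof (Rmin_r d1 d2).
      intros s Hs. destruct (Req_dec s T). subst. apply Hb; lra.
      eapply Rle_trans; [|apply (Hb T); lra].
      apply (MON GG (fun c => (- (kappa / INR N) * WW c + lam * FF c) * exp (lam * c)) T s); auto; try lra.
      apply GG_cont; auto. intros; apply GG_der; lra.
      intros c Hc. apply GG_der_nonpos; auto. lra. intros. apply (Hedge c); auto; lra. apply Hp. lra.
    + exists 1. split; [lra|]. intros s Hs. unfold GG. rewrite (caseC T HT Hall s) by lra. rewrite Rmult_0_l. apply FF_nonneg. Qed.

Lemma F0_dv2 : sqrt (FF 0) <= INR N * dv2 d N v 0.
Proof. pose proof INRN_pos.
  assert (E : sumUpto (fun i => sumUpto (fun j => (vnorm d (vsub (v i 0) (v j 0)))^2) N) N = 2 * INR N * FF 0).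
  { unfold FF. rewrite <- (var_identity N d (fun i k => u i 0 k)) by (intros; apply mean_zero; auto; lra).
    apply sumUpto_ext; intros i Hi. apply sumUpto_ext; intros j Hj. unfold vnorm, vsub.
    rewrite pow2_sqrt by apply sq_nonneg_sum. apply sumUpto_ext; intros. unfold u. f_equal. ring. }
  unfold dv2. rewrite E. pose proof (FF_nonneg 0).
  apply sq_le_inv. apply sqrt_pos. apply Rmult_le_pos. lra. apply sqrt_pos.
  rewrite pow2_sqrt by auto. rewrite Rpow_mult_distr. rewrite pow2_sqrt.
  replace (INR N ^ 2 * (/ INR N ^ 2 * (2 * INR N * FF 0))) with (2 * INR N * FF 0) by (field; lra).
  assert (1 <= INR N) by (apply (le_INR 1); auto). nra.
  apply Rmult_le_pos. apply Rlt_le, Rinv_0_lt_compat, pow_lt; auto. nra. Qed.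

Lemma final : chain_connected torus d N (fun i => x i 0) r ->
  16 * INR N ^ 4 / r * dv2 d N v 0 <= kappa ->
  forall t, 0 <= t ->
      maxUpto (fun i => vnorm d (vsub (v i t) (vbar0 N v))) N <=
        dvinf d N v 0 * exp (- (kappa / INR N) * t) +
        2 * INR N * dv2 d N v 0 * exp (- (kappa / (INR N)^3) * t).
Proof. intros Hch Hkap t Ht. pose proof INRN_pos. pose proof lam_pos.
  pose proof F0_dv2. pose proof (sqrt_pos (FF 0)). pose proof (FF_nonneg 0).
  assert (Hdv : 0 <= dv2 d N v 0) by apply sqrt_pos.
  assert (Hsmall : 4 * sqrt (FF 0) / lam <= r / 8).
  { unfold lam. replace (4 * sqrt (FF 0) / (2 * kappa / INR N ^ 3)) with (2 * INR N ^ 3 * sqrt (FF 0) / kappa) by (field; lra).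
    apply Rmult_le_reg_r with kappa; auto. unfold Rdiv at 1. rewrite Rmult_assoc, Rinv_l, Rmult_1_r by lra.
    apply Rle_trans with (2 * INR N ^ 3 * (INR N * dv2 d N v 0)).
    apply Rmult_le_compat_l; auto. apply Rmult_le_pos; [lra| apply pow_le; lra].
    apply Rmult_le_compat_r with (r := r / 8) in Hkap; [|lra].
    replace (16 * INR N ^ 4 / r * dv2 d N v 0 * (r / 8)) with (2 * INR N ^ 3 * (INR N * dv2 d N v 0)) in Hkap by (field; lra).
    lra. }
  pose proof (main_bound Hch Hsmall t Ht) as HG.
  pose proof (FF_decay t HG) as HF.
  assert (Hsq : sqrt (FF t) <= sqrt (FF 0) * exp (- (kappa / (INR N)^3) * t)).
  { apply sq_le_inv. apply sqrt_pos. apply Rmult_le_pos; auto. apply Rlt_le, exp_pos.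
    rewrite pow2_sqrt by apply FF_nonneg. rewrite Rpow_mult_distr, pow2_sqrt by auto.
    replace (- (kappa / INR N ^ 3) * t) with ((- lam * t) / 2) by (unfold lam; field; lra). rewrite exp_half. auto. }
  apply maxUpto_le.
  - pose proof (maxUpto_nonneg (fun i => maxUpto (fun j => vnorm d (vsub (v i 0) (v j 0))) N) N). fold (dvinf d N v 0) in H4.
    pose proof (exp_pos (- (kappa / INR N) * t)). pose proof (exp_pos (- (kappa / INR N ^ 3) * t)).
    apply Rplus_le_le_0_compat; repeat apply Rmult_le_pos; lra.
  - intros i Hi. 
    assert (vnorm d (vsub (v i t) (vbar0 N v)) <= sqrt (FF t)).
    { unfold vnorm, vsub. apply sqrt_le_1_alt. apply (sumUpto_term (fun i => sumUpto (fun k => (u i t k)^2) d) N i); auto.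
      intros; apply sq_nonneg_sum. }
    pose proof (maxUpto_nonneg (fun i => maxUpto (fun j => vnorm d (vsub (v i 0) (v j 0))) N) N). fold (dvinf d N v 0) in H5.
    pose proof (exp_pos (- (kappa / INR N) * t)). pose proof (exp_pos (- (kappa / INR N ^ 3) * t)).
    assert (sqrt (FF 0) * exp (- (kappa / INR N ^ 3) * t) <= INR N * dv2 d N v 0 * exp (- (kappa / INR N ^ 3) * t))
      by (apply Rmult_le_compat_r; lra).
    assert (0 <= dvinf d N v 0 * exp (- (kappa / INR N) * t)) by (apply Rmult_le_pos; lra).
    assert (0 <= INR N * dv2 d N v 0 * exp (- (kappa / INR N ^ 3) * t)) by (apply Rmult_le_pos; [apply Rmult_le_pos|]; lra).
    lra. Qed.
End Main.

Lemma phi_ge1 (phi : R -> R) r : 0 < r -> (exists s, Dphi_set phi s) ->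
  (forall D, is_lub (Dphi_set phi) D -> r <= D / 6) -> forall h, 0 < h <= 2 * r -> 1 <= phi h.
Proof. intros Hr Hex Hlub h Hh.
  assert (exists s, Dphi_set phi s /\ h <= s) as [s [[Hs0 Hs] Hhs]].
  { apply NNPP. intros Hn.
    assert (Hb : forall s, Dphi_set phi s -> s <= h).
    { intros s Hs. destruct (Rle_or_lt s h); auto. exfalso. apply Hn. exists s. split; auto; lra. }
    destruct (completeness (Dphi_set phi) ltac:(exists h; intros s Hs; apply Hb; auto) Hex) as [D HD].
    specialize (Hlub D HD). destruct HD as [_ HD2]. specialize (HD2 h Hb). lra. }
  apply Hs. lra. Qed.

Theorem theorem1p2 :
  exists C : R, 1 <= C /\
  forall (torus : bool) (d N : nat) (phi : R -> R) (kappa r : R)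
         (x v : nat -> R -> vec),
    (1 <= d)%nat -> (1 <= N)%nat ->
    (forall h, 0 <= h -> 0 <= phi h) ->
    0 < kappa ->
    (* D_phi > 0 *)
    (exists s, Dphi_set phi s) ->
    0 < r ->
    (* r <= D_phi / 6 (vacuous when D_phi = +oo) *)
    (forall D, is_lub (Dphi_set phi) D -> r <= D / 6) ->
    CS_solution torus d N phi kappa x v ->
    chain_connected torus d N (fun i => x i 0) r ->
    C * (16 * (INR N)^4 / r * dv2 d N v 0) <= kappa ->
    forall t, 0 <= t ->
      maxUpto (fun i => vnorm d (vsub (v i t) (vbar0 N v))) N <=
        dvinf d N v 0 * exp (- (kappa / INR N) * t) +
        2 * INR N * dv2 d N v 0 * exp (- (kappa / (INR N)^3) * t).
Proof.
  exists 1. split; [lra|].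
  intros torus d N phi kappa r x v Hd HN Hphi0 Hk Hex Hr Hlub Hsol Hch Hkap t Ht.
  apply (final torus d N phi kappa r x v HN Hphi0 Hk Hr (phi_ge1 phi r Hr Hex Hlub) Hsol Hch); auto. lra.
Qed.
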